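(* Let $(\mathcal{S}_1,\mathcal{S}_2)$ be an $S$-pair, let $i\in\{1,2\}$, and let $A \in \mathcal{S}_i$ with $\alpha = |A|$. Suppose that for some $j \in \{1,\dots,\alpha-1\}$ and some $x \in A$, every $j$-element subset of $A - x$ lies in $\mathcal{S}_i$. Then every $j$-element subset of $A$ lies in $\mathcal{S}_i$.
   Context: Let $S$ be a finite nonempty set and $\mathcal{S}_1, \mathcal{S}_2 \subseteq 2^S$. The pair $(\mathcal{S}_1,\mathcal{S}_2)$ is an $S$-pair if: (S1) for $i=1,2$, if $A,B \in \mathcal{S}_i$ with $B \subset A$ and $|A| = |B|+1$, then every $|B|$-element subset of $A$ lies in $\mathcal{S}_i$; (S2) for $i=1,2$, if $A,B \in \mathcal{S}_i$ with $|A|=|B|$ and $|A\cap B| = |A|-1$, then $A\cup B \in \mathcal{S}_i$; (S3) for $i=1,2$, not every singleton $\{s\}$, $s\in S$, lies in $\mathcal{S}_i$, and $S \notin \mathcal{S}_i$; (S4) for $k = 1,\dots,|S|-1$ and $x\in S$, if every $k$-element subset of $S - x$ lies in $\mathcal{S}_1$, then not every $(|S|-k)$-element subset of $S-x$ lies in $\mathcal{S}_2$. *)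

(* Defs.v *)
From mathcomp Require Import all_boot.
Set Implicit Arguments. Unset Strict Implicit. Unset Printing Implicit Defensive.

Definition S1_ax (S : finType) (F : {set {set S}}) : Prop :=
  forall A B : {set S}, A \in F -> B \in F -> B \proper A -> #|A| = #|B|.+1 ->
    forall C : {set S}, C \subset A -> #|C| = #|B| -> C \in F.

Definition S2_ax (S : finType) (F : {set {set S}}) : Prop :=
  forall A B : {set S}, A \in F -> B \in F -> #|A| = #|B| ->
    #|A :&: B| = #|A| - 1 -> A :|: B \in F.

Definition S3_ax (S : finType) (F : {set {set S}}) : Prop :=
  ~ (forall s : S, [set s] \in F) /\ [set: S] \notin F.

Definition S4_ax (S : finType) (F1 F2 : {set {set S}}) : Prop :=
  forall (k : nat) (x : S), 1 <= k <= #|S| - 1 ->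
    (forall B : {set S}, B \subset [set~ x] -> #|B| = k -> B \in F1) ->
    ~ (forall B : {set S}, B \subset [set~ x] -> #|B| = #|S| - k -> B \in F2).

Definition S_pair (S : finType) (F1 F2 : {set {set S}}) : Prop :=
  (S1_ax F1 /\ S1_ax F2) /\ (S2_ax F1 /\ S2_ax F2) /\
  (S3_ax F1 /\ S3_ax F2) /\ S4_ax F1 F2.

(* Main.v *)
Require Import Defs.
From mathcomp Require Import all_boot.
From mathcomp Require Import zify.

Section Aux.
Variables (S : finType) (F : {set {set S}}).

Lemma step_up (H2 : S2_ax F) (D : {set S}) k : 1 <= k ->
  (forall B : {set S}, B \subset D -> #|B| = k -> B \in F) ->
  forall C : {set S}, C \subset D -> #|C| = k.+1 -> C \in F.
Proof.
move=> k1 Hk C CD Cc.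
have : 0 < #|C| by rewrite Cc.
case/card_gt0P=> a aC.
have Ca : #|C :\ a| = k by move: (cardsD1 a C); rewrite aC Cc /=; lia.
have : 0 < #|C :\ a| by rewrite Ca.
case/card_gt0P=> b; rewrite in_setD1 => /andP[ba bC].
have Cb : #|C :\ b| = k by move: (cardsD1 b C); rewrite bC Cc /=; lia.
have sub1 : forall z, C :\ z \subset D.
  move=> z; apply: subset_trans CD; exact: subsetDl.
have -> : C = (C :\ a) :|: (C :\ b).
  apply/setP=> z; rewrite in_setU !in_setD1.
  case: (z =P a) => [->|_] /=; last by case: (z \in C); case: (z == b).
  by rewrite eq_sym ba.
apply: H2; [exact: Hk|exact: Hk|by rewrite Ca Cb|].
have -> : (C :\ a) :&: (C :\ b) = (C :\ a) :\ b.
  by apply/setP=> z; rewrite !inE; case: (z == a); case: (z == b); case: (z \in C).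
move: (cardsD1 b (C :\ a)); rewrite in_setD1 ba bC /= Ca; lia.
Qed.

Lemma up_all (H2 : S2_ax F) (D : {set S}) k : 1 <= k ->
  (forall B : {set S}, B \subset D -> #|B| = k -> B \in F) ->
  forall n (B : {set S}), B \subset D -> #|B| = k + n -> B \in F.
Proof.
move=> k1 Hk; elim=> [|n IH] B BD Bc; first by apply: Hk => //; rewrite Bc addn0.
apply: (@step_up H2 D (k + n) _ _ B BD); [lia|exact: IH|].
by rewrite Bc addnS.
Qed.

End Aux.

Theorem mainTheorem6 (S : finType) (F1 F2 : {set {set S}}) (i : bool)
    (A : {set S}) (j : nat) (x : S) :
  0 < #|S| ->
  S_pair F1 F2 ->
  let Fi := if i then F1 else F2 in
  A \in Fi ->
  1 <= j <= #|A| - 1 ->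
  x \in A ->
  (forall B : {set S}, B \subset A :\ x -> #|B| = j -> B \in Fi) ->
  forall B : {set S}, B \subset A -> #|B| = j -> B \in Fi.
Proof.
move=> _ [[H11 H12] [[H21 H22] _]] Fi.
have [H1 H2] : S1_ax Fi /\ S2_ax Fi by rewrite /Fi; destruct i; split.
move=> AF /andP[j1 jA] xA Hj.
have Ax : #|A :\ x| = #|A| - 1 by move: (cardsD1 x A); rewrite xA /=; lia.
have Hup : forall k (B : {set S}), j <= k -> k <= #|A| - 1 -> B \subset A :\ x -> #|B| = k -> B \in Fi.
  move=> k B jk kA BD Bc.
  apply: (@up_all _ _ H2 _ _ j1 Hj (k - j)) BD _; rewrite Bc; lia.
suff Hd : forall n (C : {set S}), C \subset A -> #|C| = #|A| - n -> j <= #|A| - n -> C \in Fi.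
  move=> B BA Bc; apply: (Hd (#|A| - j)) BA _ _; lia.
elim=> [|n IH] C CA Cc jC.
  have -> : C = A by apply/eqP; rewrite eqEcard CA Cc subn0 leqnn.
  exact: AF.
have : ~~ (A \subset C).
  apply/negP=> HAC; move: (subset_leq_card HAC); lia.
case/subsetPn=> y yA yC.
set A' := y |: C.
have A'c : #|A'| = #|A| - n by rewrite cardsU1 yC Cc; lia.
have A'A : A' \subset A by rewrite subUset sub1set yA CA.
have A'F : A' \in Fi by apply: IH => //; lia.
have CA' : C \subset A' by exact: subsetUr.
case xA' : (x \in A').
- have B'c : #|A' :\ x| = #|A| - n.+1 by move: (cardsD1 x A'); rewrite xA' /=; lia.
  have B'F : A' :\ x \in Fi.
    apply: (Hup (#|A| - n.+1)) => //; first lia.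
    by rewrite setSD.
  apply: (H1 A' (A' :\ x)) => //.
  + by rewrite properD1.
  + rewrite B'c A'c; lia.
  + by rewrite Cc B'c.
- have CAx : C \subset A :\ x.
    apply/subsetP=> z zC; rewrite in_setD1 (subsetP CA) // andbT.
    apply/eqP=> zx; move: xA'; rewrite -zx (subsetP CA') //.
  have CF : C \in Fi by apply: (Hup (#|A| - n.+1)) => //; lia.
  apply: (H1 A' C) => //.
  + by rewrite properEcard CA' A'c Cc; lia.
  + rewrite Cc A'c; lia.
Qed.
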